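(* Let $M\models\mathrm{AA}$ and let $D\subseteq M$ be formula-definable. Assume $0\in D$ and $d(x+1,D)\le d(x,D)$ for all $x\in M$. Then $D=M$.
   Context: Structures are complete metric spaces of diameter at most $1$ in the language $L=\{+,\cdot,\wedge,\vee,0,1\}$ (operations $1$-Lipschitz, $d$ the only relation symbol). Affine formulas are built from $1$ and atomic formulas $d(t_1,t_2)$ using $+$, scalar multiplication by reals, $\sup_x$, $\inf_x$. $\mathrm{AA}$ is the set of all closed affine conditions true in every model of first-order Peano arithmetic (formulated in $L$ with lattice operations min/max and discrete metric). A closed set $D\subseteq M$ is formula-definable if there is an affine formula $\phi(x)$ with parameters from $M$ such that $d(x,D)=\inf_{y\in D}d(x,y)=\phi^M(x)$ for all $x\in M$. *)

(* Defs.v *)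
From mathcomp Require Import all_boot all_order all_algebra.
From mathcomp Require Import all_classical all_reals.
From mathcomp Require Import Rstruct.
Set Implicit Arguments. Unset Strict Implicit. Unset Printing Implicit Defensive.
Import Order.TTheory GRing.Theory Num.Theory.
Local Open Scope classical_set_scope.
Local Open Scope ring_scope.

Notation R := Rdefinitions.R.

Inductive term : Type :=
| TVar  : nat -> term
| TZero : term
| TOne  : term
| TAdd  : term -> term -> term
| TMul  : term -> term -> term
| TMeet : term -> term -> term
| TJoin : term -> term -> term.

(* Affine formulas: 1, d(t1,t2), +, scalar multiplication by reals,
   sup_x, inf_x (the quantifiers bind de Bruijn variable 0). *)
Inductive aformula : Type :=
| AOne   : aformula
| ADist  : term -> term -> aformula
| AAdd   : aformula -> aformula -> aformula
| AScale : R -> aformula -> aformula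
| ASup   : aformula -> aformula
| AInf   : aformula -> aformula.

Fixpoint tclosed_at (k : nat) (t : term) : bool :=
  match t with
  | TVar n => (n < k)%N
  | TZero | TOne => true
  | TAdd a b | TMul a b | TMeet a b | TJoin a b => tclosed_at k a && tclosed_at k b
  end.

Fixpoint aclosed_at (k : nat) (f : aformula) : bool :=
  match f with
  | AOne => true
  | ADist a b => tclosed_at k a && tclosed_at k b
  | AAdd a b => aclosed_at k a && aclosed_at k b
  | AScale _ a => aclosed_at k a
  | ASup a | AInf a => aclosed_at k.+1 a
  end.

Definition asentence (f : aformula) : bool := aclosed_at 0 f.

(* L-structures: complete metric spaces of diameter <= 1 with
   1-Lipschitz operations (product spaces carry the max metric). *)
Record AStruct : Type := {
  carrier :> Type;
  dist : carrier -> carrier -> R;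
  s_zero : carrier;
  s_one : carrier;
  s_add : carrier -> carrier -> carrier;
  s_mul : carrier -> carrier -> carrier;
  s_meet : carrier -> carrier -> carrier;
  s_join : carrier -> carrier -> carrier;
  dist_ge0 : forall x y, 0 <= dist x y;
  dist_le1 : forall x y, dist x y <= 1;
  dist_eq0 : forall x y, dist x y = 0 <-> x = y;
  dist_sym : forall x y, dist x y = dist y x;
  dist_tri : forall x y z, dist x z <= dist x y + dist y z;
  dist_complete : forall u : nat -> carrier,
    (forall eps : R, 0 < eps -> exists N : nat, forall m n : nat,
        (N <= m)%N -> (N <= n)%N -> dist (u m) (u n) < eps) ->
    exists l : carrier, forall eps : R, 0 < eps -> exists N : nat,
        forall n : nat, (N <= n)%N -> dist (u n) l < eps;
  add_lip : forall x x' y y',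
    dist (s_add x y) (s_add x' y') <= Num.max (dist x x') (dist y y');
  mul_lip : forall x x' y y',
    dist (s_mul x y) (s_mul x' y') <= Num.max (dist x x') (dist y y');
  meet_lip : forall x x' y y',
    dist (s_meet x y) (s_meet x' y') <= Num.max (dist x x') (dist y y');
  join_lip : forall x x' y y',
    dist (s_join x y) (s_join x' y') <= Num.max (dist x x') (dist y y')
}.

Definition scons {T : Type} (x : T) (e : nat -> T) : nat -> T :=
  fun n => match n with O => x | S k => e k end.

Fixpoint teval (M : AStruct) (e : nat -> M) (t : term) : M :=
  match t with
  | TVar n => e n
  | TZero => s_zero M
  | TOne => s_one M
  | TAdd a b => s_add (teval e a) (teval e b)
  | TMul a b => s_mul (teval e a) (teval e b)
  | TMeet a b => s_meet (teval e a) (teval e b)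
  | TJoin a b => s_join (teval e a) (teval e b)
  end.

(* value phi^M[e] of an affine formula (sup / inf over the nonempty
   carrier of a bounded family, using the real supremum/infimum) *)
Fixpoint aeval (M : AStruct) (e : nat -> M) (f : aformula) : R :=
  match f with
  | AOne => 1
  | ADist a b => dist (teval e a) (teval e b)
  | AAdd a b => aeval e a + aeval e b
  | AScale r a => r * aeval e a
  | ASup a => sup [set aeval (scons x e) a | x in [set: carrier M]]
  | AInf a => inf [set aeval (scons x e) a | x in [set: carrier M]]
  end.

(* A closed affine condition is "phi >= 0" for a sentence phi (conditions
   phi <= 0, phi <= psi, phi = r are expressible by such ones). *)
Definition holds (M : AStruct) (f : aformula) : Prop :=
  forall e : nat -> M, 0 <= aeval e f.

(* First-order (classical, two-valued) formulas in the language L,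
   used to state the induction schema of PA. *)
Inductive foformula : Type :=
| FEq  : term -> term -> foformula
| FBot : foformula
| FImp : foformula -> foformula -> foformula
| FAll : foformula -> foformula.

Fixpoint fsat (M : AStruct) (e : nat -> M) (f : foformula) : Prop :=
  match f with
  | FEq a b => teval e a = teval e b
  | FBot => False
  | FImp a b => fsat e a -> fsat e b
  | FAll a => forall x : M, fsat (scons x e) a
  end.

Definition pa_le (M : AStruct) (x y : M) : Prop := exists z, s_add x z = y.

(* M is a model of first-order Peano arithmetic, formulated in L with the
   lattice operations min/max (w.r.t. the order of PA) and the discrete metric. *)
Definition is_PA_model (M : AStruct) : Prop :=
  (forall x y : M, x <> y -> dist x y = 1) /\
  (forall x : M, s_add x (s_one M) <> s_zero M) /\
  (forall x y : M, s_add x (s_one M) = s_add y (s_one M) -> x = y) /\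
  (forall x : M, s_add x (s_zero M) = x) /\
  (forall x y : M, s_add x (s_add y (s_one M)) = s_add (s_add x y) (s_one M)) /\
  (forall x : M, s_mul x (s_zero M) = s_zero M) /\
  (forall x y : M, s_mul x (s_add y (s_one M)) = s_add (s_mul x y) x) /\
  (* induction schema (variable 0 is the induction variable, the other
     free variables are parameters) *)
  (forall (phi : foformula) (e : nat -> M),
      fsat (scons (s_zero M) e) phi ->
      (forall x : M, fsat (scons x e) phi -> fsat (scons (s_add x (s_one M)) e) phi) ->
      forall x : M, fsat (scons x e) phi) /\
  (forall x y : M, (pa_le x y -> s_meet x y = x) /\ (pa_le y x -> s_meet x y = y)) /\
  (forall x y : M, (pa_le x y -> s_join x y = y) /\ (pa_le y x -> s_join x y = x)).

Definition in_AA (f : aformula) : Prop :=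
  asentence f /\ forall N : AStruct, is_PA_model N -> holds N f.

Definition models_AA (M : AStruct) : Prop :=
  forall f : aformula, in_AA f -> holds M f.

Definition dist_set (M : AStruct) (D : set M) (x : M) : R :=
  inf [set dist x y | y in D].

Definition closed_set (M : AStruct) (D : set M) : Prop :=
  forall x : M, (forall eps : R, 0 < eps -> exists2 y, D y & dist x y < eps) -> D x.

(* d(x,D) = phi^M(x, a) for an affine formula phi whose free variable 0 is x
   and whose other free variables are interpreted by parameters a from M *)
Definition formula_definable (M : AStruct) (D : set M) : Prop :=
  closed_set D /\
  exists (phi : aformula) (a : nat -> M),
    forall x : M, dist_set D x = aeval (scons x a) phi.

(* Main.v *)
Require Import Defs.
From mathcomp Require Import all_boot all_order all_algebra.
From mathcomp Require Import all_classical all_reals.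
From mathcomp Require Import Rstruct.
From mathcomp Require Import lra.
Import Order.TTheory GRing.Theory Num.Theory.
Local Open Scope classical_set_scope.
Local Open Scope ring_scope.

Lemma maxlist (l : seq R) (S : set R) : S !=set0 -> (forall s, S s -> s \in l) ->
  exists m, S m /\ (forall s, S s -> s <= m).
Proof.
elim: l S => [|v l IH] S [s0 Ss0] Hl; first by move: (Hl _ Ss0).
have Hl' : forall s, [set s | S s /\ s != v] s -> s \in l.
  move=> s [Ss sv]; move: (Hl _ Ss); rewrite in_cons => /orP[/eqP sv'|//].
  by rewrite sv' eqxx in sv.
case: (pselect ([set s | S s /\ s != v] !=set0)) => [ne|e].
- have [m [[Sm _] Hm]] := IH _ ne Hl'.
  case: (pselect (S v)) => Sv.
  + case: (lerP v m) => vm.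
    * exists m; split => // s Ss; case: (eqVneq s v) => [->//|sv]; exact: Hm.
    * exists v; split => // s Ss; case: (eqVneq s v) => [->//|sv].
      exact: (le_trans (Hm _ (conj Ss sv)) (ltW vm)).
  + exists m; split => // s Ss; case: (eqVneq s v) => [sv|sv]; last exact: Hm.
    by rewrite sv in Ss.
- have Ss0v : s0 = v.
    apply: contra_notP e => h; exists s0; split => //; exact/eqP.
  exists v; split; first by rewrite -Ss0v.
  move=> s Ss; case: (eqVneq s v) => [->//|sv].
  by exfalso; apply: e; exists s.
Qed.

Lemma sup_fin (l : seq R) (S : set R) : S !=set0 -> (forall s, S s -> s \in l) ->
  S (sup S) /\ (forall s, S s -> s <= sup S).
Proof.
move=> ne Hl; have [m [Sm Hm]] := @maxlist l S ne Hl.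
have -> : sup S = m.
  apply/eqP; rewrite eq_le; apply/andP; split; first by apply: ge_sup => // s; apply: Hm.
  by apply: ub_le_sup => //; exists m => s; apply: Hm.
by [].
Qed.

Lemma inf_fin (l : seq R) (S : set R) : S !=set0 -> (forall s, S s -> s \in l) ->
  S (inf S) /\ (forall s, S s -> inf S <= s).
Proof.
move=> [s0 Ss0] Hl.
have ne : (-%R @` S) !=set0 by exists (- s0); exists s0.
have Hl' : forall s, (-%R @` S) s -> s \in map -%R l.
  by move=> _ [s Ss <-]; rewrite map_f //; apply: Hl.
have [[s Ss Hs] Hub] := @sup_fin _ _ ne Hl'.
rewrite /inf; split; first by rewrite -Hs opprK.
move=> t St; rewrite lerNl; apply: Hub; by exists t.
Qed.

Definition FTrue := FImp FBot FBot.
Definition FNot a := FImp a FBot.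
Definition FOr a b := FImp (FNot a) b.
Definition FAnd a b := FNot (FImp a (FNot b)).
Definition FEx a := FNot (FAll (FNot a)).
Definition FBigOr (l : seq foformula) := foldr FOr FBot l.

Section FSem.
Variable M : AStruct.
Implicit Types e : nat -> M.
Lemma fsat_true e : fsat e FTrue. Proof. by []. Qed.
Lemma fsat_not e a : fsat e (FNot a) <-> ~ fsat e a. Proof. by []. Qed.
Lemma fsat_or e a b : fsat e (FOr a b) <-> fsat e a \/ fsat e b.
Proof.
rewrite /=; split; last by case=> h // na; exfalso; apply: na.
by move=> h; case: (pselect (fsat e a)) => ha; [left|right; apply: h].
Qed.
Lemma fsat_and e a b : fsat e (FAnd a b) <-> fsat e a /\ fsat e b.
Proof.
rewrite /=; split; last by case=> ha hb h; apply: h.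
move=> h; case: (pselect (fsat e a)) => ha; last by exfalso; apply: h.
case: (pselect (fsat e b)) => hb; last by exfalso; apply: h.
by [].
Qed.
Lemma fsat_ex e a : fsat (M:=M) e (FEx a) <-> exists x, fsat (scons x e) a.
Proof.
rewrite /=; split; last by case=> x hx h; apply: (h x).
move=> h; case: (pselect (exists x, fsat (scons x e) a)) => // nx.
by exfalso; apply: h => x hx; apply: nx; exists x.
Qed.
Lemma fsat_bigor (T : eqType) e (F : T -> foformula) (P : pred T) (l : seq T) :
  fsat e (FBigOr [seq F x | x <- l & P x]) <-> exists2 x, (x \in l) && P x & fsat e (F x).
Proof.
elim: l => [|y l IH] /=; first by split=> // [[]].
case Py: (P y) => /=.
  have := fsat_or e (F y) (FBigOr [seq F x | x <- l & P x]); rewrite /FOr /= => ->.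
  rewrite IH; split.
    case=> [h|[x /andP[xl Px] hx]]; first by exists y; rewrite ?in_cons ?eqxx ?Py.
    by exists x; rewrite // in_cons xl orbT Px.
  move=> [x]; rewrite in_cons => /andP[/orP[/eqP->|xl] Px] hx; [left|right] => //.
  by exists x; rewrite ?xl ?Px.
rewrite IH; split.
  by move=> [x /andP[xl Px] hx]; exists x; rewrite // in_cons xl orbT.
move=> [x]; rewrite in_cons => /andP[/orP[/eqP xy|xl] Px] hx.
  by rewrite xy Py in Px.
by exists x; rewrite ?xl.
Qed.
End FSem.

Fixpoint vals (f : aformula) : seq R :=
  match f with
  | AOne => [:: 1]
  | ADist _ _ => [:: 0; 1]
  | AAdd a b => [seq u + w | u <- vals a, w <- vals b]
  | AScale r a => [seq r * u | u <- vals a]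
  | ASup a => vals a
  | AInf a => vals a
  end.

Fixpoint Sat (f : aformula) (P : R -> bool) : foformula :=
  match f with
  | AOne => if P 1 then FTrue else FBot
  | ADist t1 t2 => FOr (if P 0 then FEq t1 t2 else FBot)
                       (if P 1 then FNot (FEq t1 t2) else FBot)
  | AAdd a b => FBigOr [seq FAnd (Sat a (fun x => x == p.1)) (Sat b (fun x => x == p.2))
                       | p <- [seq (u, w) | u <- vals a, w <- vals b] & P (p.1 + p.2)]
  | AScale r a => FBigOr [seq Sat a (fun x => x == u) | u <- vals a & P (r * u)]
  | ASup a => FBigOr [seq FAnd (FEx (Sat a (fun x => x == v))) (FAll (Sat a (fun x => x <= v)))
                     | v <- vals a & P v]
  | AInf a => FBigOr [seq FAnd (FEx (Sat a (fun x => x == v))) (FAll (Sat a (fun x => v <= x)))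
                     | v <- vals a & P v]
  end.

Definition discrete (M : AStruct) := forall x y : M, x <> y -> dist x y = 1.

Lemma dist_self (M : AStruct) (x : M) : dist x x = 0.
Proof. by apply/dist_eq0. Qed.

Lemma aeval_vals (M : AStruct) (HM : discrete M) (f : aformula) (e : nat -> M) :
  aeval e f \in vals f.
Proof.
elim: f e => [|t1 t2|a IHa b IHb|r a IHa|a IHa|a IHa] e /=.
- by rewrite mem_seq1.
- case: (pselect (teval e t1 = teval e t2)) => h.
    by rewrite h dist_self in_cons eqxx.
  by rewrite HM // !in_cons eqxx orbT.
- by apply: allpairs_f.
- by apply: map_f.
- have ne : [set aeval (scons x e) a | x in [set: M]] !=set0.
    by exists (aeval (scons (s_zero M) e) a); exists (s_zero M).
  have Hl : forall s, [set aeval (scons x e) a | x in [set: M]] s -> s \in vals a.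
    by move=> _ [x _ <-]; apply: IHa.
  have [[x _ <-] _] := @sup_fin (vals a) _ ne Hl.
  by [].
- have ne : [set aeval (scons x e) a | x in [set: M]] !=set0.
    by exists (aeval (scons (s_zero M) e) a); exists (s_zero M).
  have Hl : forall s, [set aeval (scons x e) a | x in [set: M]] s -> s \in vals a.
    by move=> _ [x _ <-]; apply: IHa.
  have [[x _ <-] _] := @inf_fin (vals a) _ ne Hl.
  by [].
Qed.

Lemma sat_correct (M : AStruct) (HM : discrete M) (f : aformula) :
  forall (P : R -> bool) (e : nat -> M), fsat e (Sat f P) <-> P (aeval e f).
Proof.
elim: f => [|t1 t2|a IHa b IHb|r a IHa|a IHa|a IHa] P e /=.
- case: (P 1) => /=; split => // _; exact: id.
- have := @fsat_or M e (if P 0 then FEq t1 t2 else FBot) (if P 1 then FNot (FEq t1 t2) else FBot).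
  rewrite /FOr /= => ->.
  case: (pselect (teval e t1 = teval e t2)) => h.
    rewrite h dist_self; case: (P 0); case: (P 1) => /=; split => //; tauto.
  rewrite HM //; case: (P 0); case: (P 1) => /=; split => //; tauto.
- rewrite fsat_bigor; split.
    move=> [[u w] /andP[_ Puw]] /fsat_and [/IHa /eqP -> /IHb /eqP ->] //.
  move=> Pab; exists (aeval e a, aeval e b).
    by rewrite Pab andbT; apply: allpairs_f; apply: aeval_vals.
  by apply/fsat_and; split; [apply/IHa|apply/IHb].
- rewrite fsat_bigor; split.
    by move=> [u /andP[_ Pu]] /IHa /eqP ->.
  move=> Pa; exists (aeval e a); first by rewrite Pa andbT aeval_vals.
  exact/IHa.
- set S := [set aeval (scons x e) a | x in [set: M]].
  have ne : S !=set0 by exists (aeval (scons (s_zero M) e) a); exists (s_zero M).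
  have Hl : forall s, S s -> s \in vals a by move=> _ [x _ <-]; apply: aeval_vals.
  have [[x0 _ Hx0] Hub] := @sup_fin (vals a) _ ne Hl.
  rewrite fsat_bigor; split.
    move=> [v /andP[_ Pv]] /fsat_and [/fsat_ex [x /IHa /eqP xv] H2].
    have -> : sup S = v.
      apply/eqP; rewrite eq_le; apply/andP; split.
        by apply: ge_sup => // _ [y _ <-]; have /IHa := H2 y.
      by rewrite -xv; apply: Hub; exists x.
    by [].
  move=> Ps; exists (sup S); first by rewrite Ps andbT -Hx0 aeval_vals.
  apply/fsat_and; split.
    by apply/fsat_ex; exists x0; apply/IHa; rewrite Hx0.
  by move=> y; apply/IHa; apply: Hub; exists y.
- set S := [set aeval (scons x e) a | x in [set: M]].
  have ne : S !=set0 by exists (aeval (scons (s_zero M) e) a); exists (s_zero M).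
  have Hl : forall s, S s -> s \in vals a by move=> _ [x _ <-]; apply: aeval_vals.
  have [[x0 _ Hx0] Hlb] := @inf_fin (vals a) _ ne Hl.
  rewrite fsat_bigor; split.
    move=> [v /andP[_ Pv]] /fsat_and [/fsat_ex [x /IHa /eqP xv] H2].
    have -> : inf S = v.
      apply/eqP; rewrite eq_le; apply/andP; split.
        by rewrite -xv; apply: Hlb; exists x.
      by apply: lb_le_inf => // _ [y _ <-]; have /IHa := H2 y.
    by [].
  move=> Ps; exists (inf S); first by rewrite Ps andbT -Hx0 aeval_vals.
  apply/fsat_and; split.
    by apply/fsat_ex; exists x0; apply/IHa; rewrite Hx0.
  by move=> y; apply/IHa; apply: Hlb; exists y.
Qed.

Fixpoint tsub (m : bool) (k : nat) (t : term) : term :=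
  match t with
  | TVar n => if n == k then (if m then TAdd (TVar n) TOne else TZero) else TVar n
  | TZero => TZero
  | TOne => TOne
  | TAdd a b => TAdd (tsub m k a) (tsub m k b)
  | TMul a b => TMul (tsub m k a) (tsub m k b)
  | TMeet a b => TMeet (tsub m k a) (tsub m k b)
  | TJoin a b => TJoin (tsub m k a) (tsub m k b)
  end.

Fixpoint asub (m : bool) (k : nat) (f : aformula) : aformula :=
  match f with
  | AOne => AOne
  | ADist a b => ADist (tsub m k a) (tsub m k b)
  | AAdd a b => AAdd (asub m k a) (asub m k b)
  | AScale r a => AScale r (asub m k a)
  | ASup a => ASup (asub m k.+1 a)
  | AInf a => AInf (asub m k.+1 a)
  end.

Definition sval (M : AStruct) (m : bool) (v : M) : M :=
  if m then s_add v (s_one M) else s_zero M.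

Definition upd (M : AStruct) (e : nat -> M) k (v : M) : nat -> M :=
  fun i => if i == k then v else e i.
Arguments upd {M}.
Arguments sval {M}.

Lemma teval_sub (M : AStruct) m k t (e : nat -> M) :
  teval e (tsub m k t) = teval (upd e k (sval m (e k))) t.
Proof.
elim: t => [n| | |a IHa b IHb|a IHa b IHb|a IHa b IHb|a IHa b IHb] //=;
  try by rewrite IHa IHb.
rewrite /upd; case: (eqVneq n k) => [->|//]; by case: m.
Qed.

Lemma scons_upd (M : AStruct) (e : nat -> M) k v x :
  upd (scons x e) k.+1 v = scons x (upd e k v).
Proof. by apply: funext => -[|i]. Qed.

Lemma aeval_sub (M : AStruct) m f : forall k (e : nat -> M),
  aeval e (asub m k f) = aeval (upd e k (sval m (e k))) f.
Proof.
elim: f => [|t1 t2|a IHa b IHb|r a IHa|a IHa|a IHa] k e /=.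
- by [].
- by rewrite !teval_sub.
- by rewrite IHa IHb.
- by rewrite IHa.
- congr sup; apply: eq_imagel => x _; by rewrite IHa scons_upd.
- congr inf; apply: eq_imagel => x _; by rewrite IHa scons_upd.
Qed.

Lemma aeval_succ (M : AStruct) f (e : nat -> M) y :
  aeval (scons y e) (asub true 0 f) = aeval (scons (s_add y (s_one M)) e) f.
Proof. by rewrite aeval_sub; congr aeval; apply: funext => -[|i]. Qed.

Lemma aeval_zero (M : AStruct) f (e : nat -> M) y :
  aeval (scons y e) (asub false 0 f) = aeval (scons (s_zero M) e) f.
Proof. by rewrite aeval_sub; congr aeval; apply: funext => -[|i]. Qed.

Lemma tclosed_sub j m k t : tclosed_at j t -> tclosed_at j (tsub m k t).
Proof.
elim: t => [n| | |a IHa b IHb|a IHa b IHb|a IHa b IHb|a IHa b IHb] //=;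
  try by move=> /andP[/IHa -> /IHb ->].
by case: (n == k) => //; case: m => //= ->.
Qed.

Lemma aclosed_sub f : forall j m k, aclosed_at j f -> aclosed_at j (asub m k f).
Proof.
elim: f => [|t1 t2|a IHa b IHb|r a IHa|a IHa|a IHa] j m k //=.
- by move=> /andP[/(@tclosed_sub _ m k _) -> /(@tclosed_sub _ m k _) ->].
- by move=> /andP[/IHa -> /IHb ->].
- exact: IHa.
- exact: IHa.
- exact: IHa.
Qed.

Fixpoint tdepth (t : term) : nat :=
  match t with
  | TVar n => n.+1
  | TZero | TOne => 0
  | TAdd a b | TMul a b | TMeet a b | TJoin a b => maxn (tdepth a) (tdepth b)
  end.

Fixpoint adepth (f : aformula) : nat :=
  match f with
  | AOne => 0
  | ADist a b => maxn (tdepth a) (tdepth b)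
  | AAdd a b => maxn (adepth a) (adepth b)
  | AScale _ a => adepth a
  | ASup a | AInf a => (adepth a).-1
  end.

Lemma tdepth_closed t k : (tdepth t <= k)%N -> tclosed_at k t.
Proof.
elim: t => [n| | |a IHa b IHb|a IHa b IHb|a IHa b IHb|a IHa b IHb] //=;
  by rewrite geq_max => /andP[/IHa -> /IHb ->].
Qed.

Lemma adepth_closed f : forall k, (adepth f <= k)%N -> aclosed_at k f.
Proof.
elim: f => [|t1 t2|a IHa b IHb|r a IHa|a IHa|a IHa] k //=.
- by rewrite geq_max => /andP[/tdepth_closed -> /tdepth_closed ->].
- by rewrite geq_max => /andP[/IHa -> /IHb ->].
- exact: IHa.
- by move=> h; apply: IHa; case: (adepth a) h.
- by move=> h; apply: IHa; case: (adepth a) h.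
Qed.

Lemma teval_agree (M : AStruct) k t (e1 e2 : nat -> M) : tclosed_at k t ->
  (forall i, (i < k)%N -> e1 i = e2 i) -> teval e1 t = teval e2 t.
Proof.
move=> + h; elim: t => [n| | |a IHa b IHb|a IHa b IHb|a IHa b IHb|a IHa b IHb] //=;
  try by move=> /andP[/IHa -> /IHb ->].
exact: h.
Qed.

Lemma aeval_agree (M : AStruct) f : forall k (e1 e2 : nat -> M), aclosed_at k f ->
  (forall i, (i < k)%N -> e1 i = e2 i) -> aeval e1 f = aeval e2 f.
Proof.
elim: f => [|t1 t2|a IHa b IHb|r a IHa|a IHa|a IHa] k e1 e2 //=.
- by move=> /andP[h1 h2] h; rewrite (@teval_agree M k t1 e1 e2 h1 h) (@teval_agree M k t2 e1 e2 h2 h).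
- by move=> /andP[h1 h2] h; rewrite (IHa _ _ _ h1 h) (IHb _ _ _ h2 h).
- by move=> h1 h; rewrite (IHa _ _ _ h1 h).
- move=> h1 h; congr sup; apply: eq_imagel => x _; apply: (IHa _ _ _ h1).
  by case=> [|i] //= /h.
- move=> h1 h; congr inf; apply: eq_imagel => x _; apply: (IHa _ _ _ h1).
  by case=> [|i] //= /h.
Qed.

Fixpoint bnd (f : aformula) : R :=
  match f with
  | AOne => 1
  | ADist _ _ => 1
  | AAdd a b => bnd a + bnd b
  | AScale r a => `|r| * bnd a
  | ASup a | AInf a => bnd a
  end.

Lemma aeval_bnd (M : AStruct) f : forall (e : nat -> M), `|aeval e f| <= bnd f.
Proof.
elim: f => [|t1 t2|a IHa b IHb|r a IHa|a IHa|a IHa] e /=.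
- by rewrite normr1.
- by rewrite ger0_norm ?dist_ge0 ?dist_le1.
- by apply: le_trans (ler_normD _ _) (lerD (IHa e) (IHb e)).
- by rewrite normrM; apply: ler_wpM2l => //.
- set S := [set aeval (scons x e) a | x in [set: M]].
  have ne : S !=set0 by exists (aeval (scons (s_zero M) e) a); exists (s_zero M).
  have hb : forall s, S s -> - bnd a <= s <= bnd a.
    by move=> _ [x _ <-]; rewrite -ler_norml.
  rewrite ler_norml; apply/andP; split.
    case: ne => s0 S0; apply: le_trans (ub_le_sup _ S0).
      by case/andP: (hb _ S0).
    by exists (bnd a) => s /hb /andP[].
  by apply: ge_sup => // s /hb /andP[].
- set S := [set aeval (scons x e) a | x in [set: M]].
  have ne : S !=set0 by exists (aeval (scons (s_zero M) e) a); exists (s_zero M).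
  have hb : forall s, S s -> - bnd a <= s <= bnd a.
    by move=> _ [x _ <-]; rewrite -ler_norml.
  rewrite ler_norml; apply/andP; split.
    by apply: lb_le_inf => // s /hb /andP[].
  case: ne => s0 S0; apply: le_trans (ge_inf _ S0) _.
    by exists (- bnd a) => s /hb /andP[].
  by case/andP: (hb _ S0).
Qed.

Lemma sup_img_ub (M : AStruct) f (e : nat -> M) x :
  aeval (scons x e) f <= sup [set aeval (scons y e) f | y in [set: M]].
Proof.
apply: ub_le_sup; last by exists x.
exists (bnd f) => _ [y _ <-]; exact: le_trans (ler_norm _) (aeval_bnd _ _ _).
Qed.

Lemma inf_img_lb (M : AStruct) f (e : nat -> M) x :
  inf [set aeval (scons y e) f | y in [set: M]] <= aeval (scons x e) f.
Proof.
apply: ge_inf; last by exists x.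
exists (- bnd f) => _ [y _ <-]; rewrite lerNl; apply: le_trans (aeval_bnd _ _ _).
by rewrite -normrN; apply: ler_norm.
Qed.

Fixpoint infs (n : nat) (f : aformula) : aformula :=
  match n with O => f | S n => AInf (infs n f) end.

Lemma infs_closed n : forall f k, aclosed_at (k + n) f -> aclosed_at k (infs n f).
Proof.
elim: n => [|n IH] f k /=; first by rewrite addn0.
by rewrite -addSnnS => /IH.
Qed.

Lemma infs_ge0 (M : AStruct) n f : (forall e : nat -> M, 0 <= aeval e f) ->
  forall e : nat -> M, 0 <= aeval e (infs n f).
Proof.
move=> h; elim: n => [|n IH] e //=.
apply: lb_le_inf; first by exists (aeval (scons (s_zero M) e) (infs n f)); exists (s_zero M).
by move=> _ [x _ <-].
Qed.

Definition pre (M : AStruct) (n : nat) (a e : nat -> M) : nat -> M :=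
  fun i => if (i < n)%N then a i else e (i - n)%N.
Arguments pre {M}.

Lemma infs_le (M : AStruct) f (a : nat -> M) n : forall e,
  aeval e (infs n f) <= aeval (pre n a e) f.
Proof.
elim: n => [|n IH] e /=.
  by have -> : pre 0%N a e = e by apply: funext => i; rewrite /pre subn0.
apply: le_trans (inf_img_lb _ _ _ (a n)) _.
have -> : pre n.+1 a e = pre n a (scons (a n) e); last exact: IH.
apply: funext => i; rewrite /pre.
case: (ltngtP i n) => [lt|gt|->]; rewrite ?ltnS ?(ltnW lt) ?lt //.
  by rewrite leqNgt gt /= -(subnSK gt).
by rewrite leqnn subnn.
Qed.

Definition Bof (V : seq R) : R := foldr (fun v m => Num.max `|v| m) 0 V.
Definition gaps (V : seq R) : seq R := [seq d <- [seq u - w | u <- V, w <- V] | 0 < d].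
Definition delta (V : seq R) : R := foldr Num.min 1 (gaps V).
Definition Kof (V : seq R) : R := (Bof V + Bof V) / delta V.

Lemma Bof_ge0 V : 0 <= Bof V.
Proof. by elim: V => [|v V IH] //=; rewrite le_max IH orbT. Qed.

Lemma Bof_ge V v : v \in V -> `|v| <= Bof V.
Proof.
elim: V => [|w V IH] //; rewrite in_cons => /orP[/eqP->|vV] /=; rewrite le_max.
  by rewrite lexx.
by rewrite IH ?orbT.
Qed.

Lemma delta_gt0 V : 0 < delta V.
Proof.
rewrite /delta; have : all (fun d => 0 < d) (gaps V) by apply/allP => d; rewrite mem_filter => /andP[].
elim: (gaps V) => [|d l IH] //= /andP[d0 /IH h]; by rewrite lt_min d0 h.
Qed.

Lemma delta_le V u w : u \in V -> w \in V -> w < u -> delta V <= u - w.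
Proof.
move=> uV wV wu; have : u - w \in gaps V.
  by rewrite mem_filter subr_gt0 wu /=; apply: allpairs_f.
rewrite /delta; elim: (gaps V) => [|d l IH] //=; rewrite in_cons => /orP[/eqP<-|/IH h].
  by rewrite ge_min lexx.
by rewrite ge_min h orbT.
Qed.

Lemma Kof_ge0 V : 0 <= Kof V.
Proof. by rewrite /Kof divr_ge0 ?addr_ge0 ?Bof_ge0 // ltW // delta_gt0. Qed.

Definition Cf (f : aformula) : aformula :=
  AAdd (AScale (Kof (vals f)) (ASup (AAdd (asub true 0 f) (AScale (-1) f))))
       (AAdd (AScale (-1) (ASup f)) (ASup (asub false 0 f))).

Lemma sup_const (M : AStruct) (c : R) : sup [set c | _ in [set: M]] = c.
Proof.
have -> : [set c | _ in [set: M]] = [set c].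
  by apply/seteqP; split => [_ [_ _ <-]//|_ ->]; exists (s_zero M).
exact: sup1.
Qed.

Lemma Cf_eval (M : AStruct) f (e : nat -> M) :
  aeval e (Cf f) = Kof (vals f) * sup [set aeval (scons y e) (AAdd (asub true 0 f) (AScale (-1) f)) | y in [set: M]]
    + (-1 * sup [set aeval (scons x e) f | x in [set: M]] + aeval (scons (s_zero M) e) f).
Proof.
rewrite /Cf /=; congr (_ + (_ + _)).
rewrite -(sup_const M (aeval (scons (s_zero M) e) f)); congr sup.
by apply: eq_imagel => x _; rewrite aeval_zero.
Qed.

Lemma PA_Cf (N : AStruct) (HN : is_PA_model N) f (e : nat -> N) : 0 <= aeval e (Cf f).
Proof.
case: HN => [Hdisc [_ [_ [_ [_ [_ [_ [Hind _]]]]]]]].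
have HD : discrete N by [].
rewrite Cf_eval.
set g := fun x => aeval (scons x e) f.
set V := vals f.
set Sd := sup _.
have gV : forall x, g x \in V by move=> x; apply: aeval_vals.
have Sd_ge : forall y, g (s_add y (s_one N)) - g y <= Sd.
  move=> y; have := sup_img_ub _ (AAdd (asub true 0 f) (AScale (-1) f)) e y.
  by rewrite /= aeval_succ mulN1r.
set Sg := sup _.
have neg : [set g x | x in [set: N]] !=set0 by exists (g (s_zero N)); exists (s_zero N).
have Hl : forall s, [set g x | x in [set: N]] s -> s \in V by move=> _ [x _ <-].
have [[xs _ Hxs] Hub] := @sup_fin V _ neg Hl.
have Bg : forall x, `|g x| <= Bof V by move=> x; apply: Bof_ge.
have K0 := Kof_ge0 V.
case: (pselect (exists y, g y < g (s_add y (s_one N)))) => [[y hy]|ny].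
- have h1 : delta V <= Sd.
    apply: le_trans (Sd_ge y); apply: delta_le => //.
  have h2 : Kof V * delta V = Bof V + Bof V.
    by rewrite /Kof -mulrA mulVf ?mulr1 // gt_eqF // delta_gt0.
  have h3 : Bof V + Bof V <= Kof V * Sd by rewrite -h2 ler_wpM2l.
  have h4 : Sg <= Bof V by rewrite /Sg -Hxs; apply: le_trans (ler_norm _) (Bg _).
  have h5 : - Bof V <= g (s_zero N).
    by rewrite lerNl; apply: le_trans (Bg (s_zero N)); rewrite -normrN ler_norm.
  rewrite mulN1r; move: h3 h4 h5; rewrite /g /=; clear; lra.
- have Hstep : forall y, g (s_add y (s_one N)) <= g y.
    by move=> y; rewrite leNgt; apply/negP => h; apply: ny; exists y.
  have Hall : forall x, g x <= g (s_zero N).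
    pose P := fun v : R => v <= g (s_zero N).
    have SC := fun x => @sat_correct N HD f P (scons x e).
    move=> x; apply/(SC x); apply: (Hind _ e) => [|z]; first by apply/(SC _); rewrite /P.
    move=> /(SC z) hz; apply/(SC _); exact: le_trans (Hstep z) hz.
  have [[ys _ Hys] Hlb] := @inf_fin V _ neg Hl.
  have h1 : 0 <= Sd.
    apply: le_trans (Sd_ge ys); rewrite subr_ge0 Hys; apply: Hlb; by exists (s_add ys (s_one N)).
  have h2 : 0 <= Kof V * Sd by apply: mulr_ge0.
  have h3 : Sg <= g (s_zero N) by rewrite /Sg -Hxs.
  rewrite mulN1r; move: h2 h3; rewrite /g /=; clear; lra.
Qed.

Lemma dist_set0 (M : AStruct) (D : set M) x : D x -> dist_set D x = 0.
Proof.
move=> Dx; apply/eqP; rewrite eq_le; apply/andP; split.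
  rewrite -(dist_self _ x); apply: ge_inf; last by exists x.
  by exists 0 => _ [y _ <-]; apply: dist_ge0.
by apply: lb_le_inf; [exists (dist x x); exists x =>//|move=> _ [y _ <-]; apply: dist_ge0].
Qed.

Theorem mainTheorem4 (M : AStruct) (HM : models_AA M) (D : set M)
  (HD : formula_definable D) (H0 : D (s_zero M))
  (Hstep : forall x : M, dist_set D (s_add x (s_one M)) <= dist_set D x) :
  D = [set: carrier M].
Proof.
case: HD => [Hcl [phi [a Hphi]]].
set n := adepth phi.
have cl1 : aclosed_at n.+1 phi by apply: adepth_closed; apply: leqW.
have clC : aclosed_at n (Cf phi).
  by rewrite /= !aclosed_sub // cl1.
have HAA : in_AA (infs n (Cf phi)).
  split; first by apply: infs_closed; rewrite add0n.
  move=> N HN e; apply: infs_ge0 => e'; exact: PA_Cf.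
have H1 := HM _ HAA a.
have H2 : 0 <= aeval a (Cf phi).
  apply: le_trans H1 (le_trans (infs_le _ _ a n a) _).
  rewrite (@aeval_agree M (Cf phi) n (pre n a a) a clC) //.
  by move=> i ilt; rewrite /pre ilt.
rewrite Cf_eval in H2.
set Sd := sup _ in H2; set Sg := sup _ in H2.
have hSd : Sd <= 0.
  apply: ge_sup; first by exists (aeval (scons (s_zero M) a) (AAdd (asub true 0 phi) (AScale (-1) phi))); exists (s_zero M).
  move=> _ [y _ <-] /=; rewrite aeval_succ -!Hphi mulN1r subr_le0; exact: Hstep.
have h0 : aeval (scons (s_zero M) a) phi = 0 by rewrite -Hphi dist_set0.
have hK : Kof (vals phi) * Sd <= 0 by rewrite mulr_ge0_le0 // Kof_ge0.
have hSg : Sg <= 0 by move: H2 hK; rewrite h0; lra.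
apply/seteqP; split => // x _.
apply: Hcl => eps eps0.
have hx : dist_set D x <= 0 by rewrite Hphi; apply: le_trans (sup_img_ub _ _ _ _) hSg.
have : inf [set dist x y | y in D] < eps by apply: le_lt_trans hx eps0.
move=> /inf_lt []; first by exists (dist x (s_zero M)); exists (s_zero M).
by move=> _ [y Dy <-] h; exists y.
Qed.
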